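(* Let $R$ be a hyperring, $\mathcal{SR}(R)$ the set of strongly regular relations on $R$ ordered by inclusion, and $\mathcal I(\gamma^*(0))$ the set of hyperideals of $R$ containing $\gamma^*(0)$ ordered by inclusion. Then the map $f:\mathcal{SR}(R)\to\mathcal I(\gamma^*(0))$, $f(\rho)=\rho(0)$, is well defined and is an isomorphism of complete lattices, with inverse $g(I)=\rho_I=\{(x,y)\in R^2: x+I=y+I\}$ (in particular $\rho_I$ is strongly regular for each $I\in\mathcal I(\gamma^*(0))$, $\rho_I(0)=I$, and $\rho_{\rho(0)}=\rho$).
   Context: Standing conventions. A hyperring means a commutative Krasner hyperring with identity: a set $R$ with a hyperoperation $+:R\times R\to\mathcal P^*(R)$ (nonempty subsets; for subsets $A,B$ one sets $A+B=\bigcup_{a\in A,b\in B}a+b$) and a binary operation $\cdot$ such that: $+$ is associative and commutative; there is $0\in R$ with $0+x=\{x\}$ for all $x$; every $x$ has a unique $-x$ with $0\in x+(-x)$; $z\in x+y$ implies $y\in -x+z$ and $x\in z-y$; $(R,\cdot)$ is a commutative monoid with identity $1$; $0\cdot x=0$; and $x(y+z)=xy+xz$. A hyperideal of $R$ is a nonempty $I\subseteq R$ with $a-b\subseteq I$ and $ra\in I$ for all $a,b\in I$, $r\in R$; $x+I=\bigcup_{y\in I}(x+y)$. An equivalence relation $\rho$ on $R$ is strongly regular if whenever $(a,b)\in\rho$ and $(c,d)\in\rho$, then $(u,v)\in\rho$ for all $u\in a+c$, $v\in b+d$, and $(ac,bd)\in\rho$; $\rho(x)$ denotes the $\rho$-class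 of $x$. Let $\mathcal U$ be the set of all finite sums of finite products of elements of $R$ (each such sum is a subset of $R$). The relation $\gamma^*$ is defined by $(a,b)\in\gamma^*$ iff there exist $a=z_1,z_2,\dots,z_{n+1}=b$ in $R$ and $U_1,\dots,U_n\in\mathcal U$ with $\{z_i,z_{i+1}\}\subseteq U_i$ for all $i$; it is the smallest strongly regular relation on $R$, and $\gamma^*(0)$ is the $\gamma^*$-class of $0$. *)

(* Defs.v *)
From Stdlib Require Import List Relations.
Import ListNotations.
Unset Implicit Arguments.

Definition subset (T : Type) := T -> Prop.
Definition set_incl (T : Type) (A B : subset T) := forall x, A x -> B x.
Definition rel_incl (T : Type) (r s : T -> T -> Prop) := forall x y, r x y -> s x y.

(* Commutative Krasner hyperring with identity.
   [hadd x y z] means z \in x + y. *)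
Record hyperring := Hyperring {
  carrier :> Type;
  hadd : carrier -> carrier -> carrier -> Prop;
  hmul : carrier -> carrier -> carrier;
  hzero : carrier;
  hone : carrier;
  hneg : carrier -> carrier;
  hadd_nonempty : forall x y, exists z, hadd x y z;
  hadd_assoc : forall x y z w,
    (exists u, hadd x y u /\ hadd u z w) <-> (exists v, hadd y z v /\ hadd x v w);
  hadd_comm : forall x y z, hadd x y z <-> hadd y x z;
  hadd_zero : forall x z, hadd hzero x z <-> z = x;
  hneg_inv : forall x, hadd x (hneg x) hzero;
  hneg_unique : forall x y, hadd x y hzero -> y = hneg x;
  hadd_revers : forall x y z, hadd x y z -> hadd (hneg x) z y /\ hadd z (hneg y) x;
  hmul_assoc : forall x y z, hmul x (hmul y z) = hmul (hmul x y) z;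
  hmul_comm : forall x y, hmul x y = hmul y x;
  hmul_one : forall x, hmul hone x = x;
  hmul_zero : forall x, hmul hzero x = hzero;
  hmul_distr : forall x y z w,
    (exists u, hadd y z u /\ w = hmul x u) <-> hadd (hmul x y) (hmul x z) w
}.

Section Defs.
Variable R : hyperring.

Definition setadd (A B : subset R) : subset R :=
  fun w => exists a b, A a /\ B b /\ hadd R a b w.

Definition singleton (a : R) : subset R := fun w => w = a.

Definition coset (x : R) (I : subset R) : subset R :=
  fun w => exists y, I y /\ hadd R x y w.

Definition hyperideal (I : subset R) : Prop :=
  (exists a, I a) /\
  (forall a b, I a -> I b -> forall w, hadd R a (hneg R b) w -> I w) /\
  (forall r a, I a -> I (hmul R r a)).

Definition equivalence_rel (rho : R -> R -> Prop) : Prop :=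
  (forall x, rho x x) /\ (forall x y, rho x y -> rho y x) /\
  (forall x y z, rho x y -> rho y z -> rho x z).

Definition strongly_regular (rho : R -> R -> Prop) : Prop :=
  equivalence_rel rho /\
  (forall a b c d, rho a b -> rho c d ->
     (forall u v, hadd R a c u -> hadd R b d v -> rho u v) /\
     rho (hmul R a c) (hmul R b d)).

Definition rho_of (I : subset R) : R -> R -> Prop :=
  fun x y => forall w, coset x I w <-> coset y I w.

Definition hprod (s : list R) : R := fold_right (hmul R) (hone R) s.

Fixpoint sumlist (a : R) (s : list R) : subset R :=
  match s with
  | [] => singleton a
  | b :: s' => setadd (singleton a) (sumlist b s')
  end.

Definition in_U (U : subset R) : Prop :=
  exists (p : list R) (ps : list (list R)),
    forall w, U w <-> sumlist (hprod p) (map hprod ps) w.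

Definition gamma (x y : R) : Prop :=
  exists U, in_U U /\ U x /\ U y.

Definition gamma_star : R -> R -> Prop := clos_trans R gamma.

Definition gamma_star0 : subset R := gamma_star (hzero R).

Definition is_lub (T : Type) (le : T -> T -> Prop) (P S : T -> Prop) (m : T) :=
  P m /\ (forall s, S s -> le s m) /\ (forall u, P u -> (forall s, S s -> le s u) -> le m u).

Definition is_glb (T : Type) (le : T -> T -> Prop) (P S : T -> Prop) (m : T) :=
  P m /\ (forall s, S s -> le m s) /\ (forall u, P u -> (forall s, S s -> le u s) -> le u m).

End Defs.

(* Main.v *)
Require Import Defs.
From Stdlib Require Import List Relations.
Import ListNotations.

Section H.
Variable R : hyperring.
Notation add := (hadd R).
Notation neg := (hneg R).
Notation mul := (hmul R).
Notation zero := (hzero R).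

Lemma neg_neg x : neg (neg x) = x.
Proof. symmetry; apply hneg_unique. apply (proj1 (hadd_comm R _ _ _)). apply hneg_inv. Qed.

Lemma add0l x : add zero x x.
Proof. apply (proj2 (hadd_zero R x x)); reflexivity. Qed.
Lemma add0r x : add x zero x.
Proof. apply (proj1 (hadd_comm R _ _ _)); apply add0l. Qed.
Lemma add0l_eq x z : add zero x z -> z = x.
Proof. apply hadd_zero. Qed.
Lemma addC x y z : add x y z -> add y x z.
Proof. apply hadd_comm. Qed.
Lemma mulx0 r : mul r zero = zero.
Proof. rewrite hmul_comm; apply hmul_zero. Qed.

Lemma assocLR x y z u w : add x y u -> add u z w -> exists v, add y z v /\ add x v w.
Proof. intros H1 H2. apply (proj1 (hadd_assoc R x y z w)). exists u; auto. Qed.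
Lemma assocRL x y z v w : add y z v -> add x v w -> exists u, add x y u /\ add u z w.
Proof. intros H1 H2. apply (proj2 (hadd_assoc R x y z w)). exists v; auto. Qed.

Lemma hadd4 a b c d x y u : add a b x -> add c d y -> add x y u ->
  exists p q, add a c p /\ add b d q /\ add p q u.
Proof.
  intros H1 H2 H3.
  destruct (assocLR _ _ _ _ _ H1 H3) as [v [Hv1 Hv2]].
  destruct (assocRL _ _ _ _ _ H2 Hv1) as [t [Ht1 Ht2]].
  apply addC in Ht1.
  destruct (assocLR _ _ _ _ _ Ht1 Ht2) as [q [Hq1 Hq2]].
  destruct (assocRL _ _ _ _ _ Hq2 Hv2) as [p [Hp1 Hp2]].
  exists p, q; auto.
Qed.

Section Ideal.
Variable I : subset R.
Hypothesis HI : hyperideal R I.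

Lemma ideal0 : I zero.
Proof. destruct HI as [[a Ha] [Hs _]]. apply (Hs a a Ha Ha). apply hneg_inv. Qed.
Lemma idealN a : I a -> I (neg a).
Proof. intro Ha. destruct HI as [_ [Hs _]]. apply (Hs zero a ideal0 Ha). apply add0l. Qed.
Lemma idealD a b w : I a -> I b -> add a b w -> I w.
Proof. intros Ha Hb Hw. destruct HI as [_ [Hs _]]. apply (Hs a (neg b) Ha (idealN b Hb)).
  rewrite neg_neg; auto. Qed.
Lemma idealM r a : I a -> I (mul r a).
Proof. destruct HI as [_ [_ Hm]]. apply Hm. Qed.

Lemma rho_of_char x y : rho_of R I x y <-> exists i, I i /\ add y i x.
Proof.
  split.
  - intro H. destruct (proj1 (H x)) as [i [Hi1 Hi2]].
    + exists zero. split; [apply ideal0 | apply add0r].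
    + exists i; auto.
  - intros [i [Hi Hyx]] w. split.
    + intros [j [Hj Hxw]]. destruct (assocLR _ _ _ _ _ Hyx Hxw) as [v [Hv1 Hv2]].
      exists v; split; auto. apply (idealD i j); auto.
    + intros [j [Hj Hyw]]. destruct (hadd_revers R _ _ _ Hyx) as [_ H2].
      destruct (assocLR _ _ _ _ _ H2 Hyw) as [v [Hv1 Hv2]].
      exists v; split; auto. apply (idealD (neg i) j); auto. apply idealN; auto.
Qed.
End Ideal.

Lemma sumlist_app a s c w : setadd R (sumlist R a s) (singleton R c) w -> sumlist R a (s ++ [c]) w.
Proof.
  revert a w; induction s as [|b s IH]; intros a w H.
  - exact H.
  - destruct H as [x [c' [[a' [t [Ha [Ht Hat]]]] [Hc Hxw]]]].
    unfold singleton in Ha, Hc; subst.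
    destruct (assocLR _ _ _ _ _ Hat Hxw) as [v [Hv1 Hv2]].
    simpl. exists a, v. split; [reflexivity|]. split; auto.
    apply IH. exists t, c. split; auto. split; [reflexivity|auto].
Qed.

Lemma hprod1 z : hprod R [z] = z.
Proof. unfold hprod; simpl. rewrite hmul_comm. apply hmul_one. Qed.

Lemma gamma_neg x y w : gamma R x y -> add x (neg y) w -> gamma R zero w.
Proof.
  intros [U [[p [ps HU]] [Ux Uy]]] Hw.
  exists (sumlist R (hprod R p) (map (hprod R) (ps ++ [[neg y]]))). split.
  - exists p, (ps ++ [[neg y]]). intro; apply iff_refl.
  - rewrite map_app. replace (map (hprod R) [[neg y]]) with [neg y] by (cbn [map]; rewrite hprod1; reflexivity). split; apply sumlist_app.
    + exists y, (neg y). split; [apply HU; exact Uy| split; [reflexivity | apply hneg_inv]].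
    + exists x, (neg y). split; [apply HU; exact Ux| split; [reflexivity | exact Hw]].
Qed.

Lemma gamma_coset I x y : hyperideal R I -> set_incl R (gamma_star0 R) I ->
  gamma R x y -> exists e, I e /\ add y e x.
Proof.
  intros HI Hg Hxy. destruct (hadd_nonempty R x (neg y)) as [e He].
  exists e. split.
  - apply Hg. unfold gamma_star0, gamma_star. apply t_step. apply (gamma_neg x y); auto.
  - destruct (hadd_revers R _ _ _ He) as [_ H2]. rewrite neg_neg in H2. apply addC; auto.
Qed.

Lemma gamma_sum b d v v' : add b d v -> add b d v' -> gamma R v v'.
Proof.
  intros Hv Hv'. exists (sumlist R (hprod R [b]) [hprod R [d]]). split.
  - exists [b], [[d]]. intro; apply iff_refl.
  - change (hprod R [b]) with (hprod R [b]). rewrite !hprod1. split; exists b, d; repeat split; auto.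
Qed.

Lemma rho_of_SR I : hyperideal R I -> set_incl R (gamma_star0 R) I ->
  strongly_regular R (rho_of R I).
Proof.
  intros HI Hg. split.
  - split; [|split].
    + intros x w; apply iff_refl.
    + intros x y H w; split; apply H.
    + intros x y z H1 H2 w; split; intro.
      * apply H2, H1; auto.
      * apply H1, H2; auto.
  - intros a b c d Hab Hcd.
    apply (rho_of_char I HI) in Hab. apply (rho_of_char I HI) in Hcd.
    destruct Hab as [i [Hi Hba]], Hcd as [j [Hj Hdc]]. split.
    + intros u v Hu Hv. apply (rho_of_char I HI).
      destruct (hadd4 _ _ _ _ _ _ _ Hba Hdc Hu) as [p [q [Hp [Hq Hpq]]]].
      destruct (gamma_coset I p v HI Hg (gamma_sum _ _ _ _ Hp Hv)) as [e [He Hve]].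
      destruct (assocLR _ _ _ _ _ Hve Hpq) as [k [Hk1 Hk2]].
      exists k. split; auto. apply (idealD I HI e q); auto. apply (idealD I HI i j); auto.
    + apply (rho_of_char I HI).
      assert (H1 : add (mul c b) (mul c i) (mul c a)).
      { apply (proj1 (hmul_distr R c b i (mul c a))). exists a; auto. }
      assert (H2 : add (mul b d) (mul b j) (mul b c)).
      { apply (proj1 (hmul_distr R b d j (mul b c))). exists c; auto. }
      rewrite (hmul_comm R c b), (hmul_comm R c a) in H1.
      destruct (assocLR _ _ _ _ _ H2 H1) as [k [Hk1 Hk2]].
      exists k. split; auto. apply (idealD I HI (mul b j) (mul c i)); auto; apply (idealM I HI); auto.
Qed.

Lemma rho_of_0 I : hyperideal R I -> forall x, rho_of R I zero x <-> I x.
Proof.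
  intros HI x. split.
  - intro H. assert (H' : rho_of R I x zero) by (intro w; split; apply H).
    apply (rho_of_char I HI) in H'. destruct H' as [i [Hi Hx]].
    apply add0l_eq in Hx. subst; auto.
  - intro Hx. assert (H' : rho_of R I x zero).
    { apply (rho_of_char I HI). exists x; split; auto. apply add0l. }
    intro w; split; apply H'.
Qed.

Section SR.
Variable rho : R -> R -> Prop.
Hypothesis Hrho : strongly_regular R rho.

Lemma SR_sumlist a s x y : sumlist R a s x -> sumlist R a s y -> rho x y.
Proof.
  destruct Hrho as [[Hr [Hs Ht]] Hc].
  revert a x y; induction s as [|b s IH]; intros a x y Hx Hy.
  - simpl in Hx, Hy. unfold singleton in *. subst. apply Hr.
  - destruct Hx as [a1 [t [Ha1 [Ht1 H1]]]], Hy as [a2 [t' [Ha2 [Ht2 H2]]]].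
    unfold singleton in Ha1, Ha2; subst.
    exact (proj1 (Hc a a t t' (Hr a) (IH _ _ _ Ht1 Ht2)) x y H1 H2).
Qed.

Lemma SR_gamma_star x y : clos_trans R (gamma R) x y -> rho x y.
Proof.
  destruct Hrho as [[Hr [Hs Ht]] Hc].
  induction 1 as [x y H|x y z _ IH1 _ IH2].
  - destruct H as [U [[p [ps HU]] [Ux Uy]]].
    apply (SR_sumlist (hprod R p) (map (hprod R) ps)); apply HU; auto.
  - eauto.
Qed.

Lemma SR_ideal : hyperideal R (rho zero) /\ set_incl R (gamma_star0 R) (rho zero).
Proof.
  destruct Hrho as [[Hr [Hs Ht]] Hc]. split; [split; [|split]|].
  - exists zero; apply Hr.
  - intros a b Ha Hb w Hw.
    assert (H1 : rho (neg b) zero).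
    { apply (proj1 (Hc zero b (neg b) (neg b) Hb (Hr _))). apply add0l. apply hneg_inv. }
    assert (H2 : rho (neg b) w).
    { apply (proj1 (Hc zero a (neg b) (neg b) Ha (Hr _))). apply add0l. exact Hw. }
    eauto.
  - intros r a Ha. rewrite <- (mulx0 r). exact (proj2 (Hc r r zero a (Hr r) Ha)).
  - intros x Hx. apply SR_gamma_star. exact Hx.
Qed.

Lemma SR_char x y : rho x y <-> exists i, rho zero i /\ add y i x.
Proof.
  destruct Hrho as [[Hr [Hs Ht]] Hc]. split.
  - intro H. destruct (hadd_nonempty R (neg y) x) as [i Hi].
    exists i. split.
    + apply (proj1 (Hc y x (neg y) (neg y) (Hs _ _ H) (Hr _))). apply hneg_inv. apply addC; auto.
    + destruct (hadd_revers R _ _ _ Hi) as [H1 _]. rewrite neg_neg in H1; auto.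
  - intros [i [Hi H]]. apply Hs.
    apply (proj1 (Hc y y zero i (Hr y) Hi)). apply add0r. exact H.
Qed.
End SR.

Definition PI (I : subset R) := hyperideal R I /\ set_incl R (gamma_star0 R) I.

Lemma PI_inter (F : subset R -> Prop) : (forall I, F I -> PI I) -> PI (fun x => forall I, F I -> I x).
Proof.
  intros HF. split; [split; [|split]|].
  - exists zero. intros I HI. apply ideal0. apply (HF I HI).
  - intros a b Ha Hb w Hw I HI. destruct (HF I HI) as [[_ [Hs _]] _]. exact (Hs a b (Ha I HI) (Hb I HI) w Hw).
  - intros r a Ha I HI. destruct (HF I HI) as [[_ [_ Hm]] _]. exact (Hm r a (Ha I HI)).
  - intros x Hx I HI. apply (proj2 (HF I HI)); auto.
Qed.

Lemma SR_inter (F : (R -> R -> Prop) -> Prop) : (forall r, F r -> strongly_regular R r) ->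
  strongly_regular R (fun x y => forall r, F r -> r x y).
Proof.
  intros HF. split; [split; [|split]|].
  - intros x r Hr. destruct (HF r Hr) as [[H _] _]; auto.
  - intros x y H r Hr. destruct (HF r Hr) as [[_ [H' _]] _]; exact (H' x y (H r Hr)).
  - intros x y z H1 H2 r Hr. destruct (HF r Hr) as [[_ [_ H']] _]; exact (H' x y z (H1 r Hr) (H2 r Hr)).
  - intros a b c d Hab Hcd. split.
    + intros u v Hu Hv r Hr. destruct (HF r Hr) as [_ Hc].
      exact (proj1 (Hc _ _ _ _ (Hab r Hr) (Hcd r Hr)) u v Hu Hv).
    + intros r Hr. destruct (HF r Hr) as [_ Hc].
      exact (proj2 (Hc _ _ _ _ (Hab r Hr) (Hcd r Hr))).
Qed.
End H.
Theorem mainTheorem17 (R : hyperring) :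
  (* f is well defined: rho(0) is a hyperideal containing gamma*(0) *)
  (forall rho : R -> R -> Prop, strongly_regular R rho ->
     hyperideal R (rho (hzero R)) /\ set_incl R (gamma_star0 R) (rho (hzero R))) /\
  (* g is well defined and f o g = id *)
  (forall I : subset R, hyperideal R I -> set_incl R (gamma_star0 R) I ->
     strongly_regular R (rho_of R I) /\ (forall x, rho_of R I (hzero R) x <-> I x)) /\
  (* g o f = id *)
  (forall rho : R -> R -> Prop, strongly_regular R rho ->
     forall x y, rho_of R (rho (hzero R)) x y <-> rho x y) /\
  (* f is an order isomorphism (monotone and order-reflecting) *)
  (forall rho sigma : R -> R -> Prop, strongly_regular R rho -> strongly_regular R sigma ->
     (rel_incl R rho sigma <-> set_incl R (rho (hzero R)) (sigma (hzero R)))) /\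
  (* both posets are complete lattices *)
  (forall S : (R -> R -> Prop) -> Prop,
     (forall rho, S rho -> strongly_regular R rho) ->
     (exists m, is_lub _ (rel_incl R) (strongly_regular R) S m) /\
     (exists m, is_glb _ (rel_incl R) (strongly_regular R) S m)) /\
  (forall S : subset R -> Prop,
     (forall I, S I -> hyperideal R I /\ set_incl R (gamma_star0 R) I) ->
     (exists m, is_lub _ (set_incl R) (fun I => hyperideal R I /\ set_incl R (gamma_star0 R) I) S m) /\
     (exists m, is_glb _ (set_incl R) (fun I => hyperideal R I /\ set_incl R (gamma_star0 R) I) S m)).
Proof.
  split; [|split; [|split; [|split; [|split]]]].
  - intros rho H. apply SR_ideal; auto.
  - intros I HI Hg. split; [apply rho_of_SR; auto | apply rho_of_0; auto].
  - intros rho H x y. destruct (SR_ideal R rho H) as [HI _].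
    rewrite (rho_of_char R _ HI). symmetry. apply SR_char; auto.
  - intros rho sigma Hr Hs. split.
    + intros Hi x Hx. apply Hi; auto.
    + intros Hi x y Hxy. apply (SR_char R sigma Hs). apply (SR_char R rho Hr) in Hxy.
      destruct Hxy as [i [Hi1 Hi2]]. exists i; auto.
  - intros S HS. split.
    + exists (fun x y => forall sigma, (strongly_regular R sigma /\ forall s, S s -> rel_incl R s sigma) -> sigma x y).
      split; [|split].
      * apply SR_inter. intros r [Hr _]; auto.
      * intros s Hs x y Hxy sigma [_ Hsig]. apply (Hsig s Hs); auto.
      * intros u Hu Hub x y Hxy. apply Hxy; auto.
    + exists (fun x y => forall r, S r -> r x y). split; [|split].
      * apply SR_inter; auto.
      * intros s Hs x y Hxy. apply Hxy; auto.
      * intros u Hu Hlb x y Hxy r Hr. apply (Hlb r Hr); auto.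
  - intros S HS. split.
    + exists (fun x => forall J, (PI R J /\ forall s, S s -> set_incl R s J) -> J x).
      split; [|split].
      * apply PI_inter. intros J [HJ _]; auto.
      * intros s Hs x Hx J [_ HJ]. apply (HJ s Hs); auto.
      * intros u Hu Hub x Hx. apply Hx; auto.
    + exists (fun x => forall J, S J -> J x). split; [|split].
      * apply PI_inter; auto.
      * intros s Hs x Hx. apply Hx; auto.
      * intros u Hu Hlb x Hx J HJ. apply (Hlb J HJ); auto.
Qed.
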